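(* If $\Omega ; \cdot ; \cdot \vdash P :: x{:}\mathbf{1}[\omega]$ and $\mathrm{live}(P)$, then there exists $Q$ such that $P\to Q$.
   Context: $\mathrm{live}(P)$ holds iff $P \equiv (\nu \tilde{n})(\pi.Q \mid R)$ for some names $\tilde n$, process $R$, and non-replicated guarded process $\pi.Q$ (i.e. $\pi$ is a prefix other than a replicated input $!x(y)$). Domain-aware session $\pi$-calculus. Domains $\omega$ range over domain tags $w$ and domain variables $\alpha$. Processes: $P ::= \mathbf 0 \mid P\mid Q \mid (\nu y)P \mid x\langle y\rangle.P \mid x(y).P \mid !x(y).P \mid [x\leftrightarrow y] \mid x\triangleright\{l_i:P_i\}_{i\in I} \mid x\triangleleft l;P \mid x\langle y@\omega\rangle.P \mid x(y@\omega).P \mid x\langle\omega\rangle.P \mid x(\alpha).P$, with $\overline{x}\langle y\rangle.P := (\nu y)x\langle y\rangle.P$, $\overline{x}\langle y@\omega\rangle.P := (\nu y)x\langle y@\omega\rangle.P$. Structural congruence $\equiv$ is the least congruence with $P\mid\mathbf 0\equiv P$, $\alpha$-conversion, $(\nu x)\mathbf 0\equiv\mathbf 0$, $[x\leftrightarrow y]\equiv[y\leftrightarrow x]$, commutativity and associativity of $\mid$, $P\mid(\nu x)Q\equiv(\nu x)(P\mid Q)$ if $x\notin fn(P)$, $(\nu x)(\nu y)P\equiv(\nu y)(\nu x)P$. Reduction $\to$ is closed under $\equiv$, parallel composition and restriction and given by: $x\langle y\rangle.Q\mid x(z).P\to Q\mid P\{y/z\}$; $x\langle y\rangle.Q\mid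 !x(z).P\to Q\mid P\{y/z\}\mid !x(z).P$; $x\langle y@\omega\rangle.P\mid x(z@\omega').Q\to P\mid Q\{y/z\}$; $x\langle\omega\rangle.P\mid x(\alpha).Q\to P\mid Q\{\omega/\alpha\}$; $(\nu x)([x\leftrightarrow y]\mid P)\to P\{y/x\}$; $x\triangleleft l_j;P\mid x\triangleright\{l_i:Q_i\}_{i\in I}\to P\mid Q_j$ ($j\in I$). Session types: $A ::= \mathbf 1 \mid A\multimap B \mid A\otimes B \mid \&\{l_i:A_i\}_{i\in I} \mid \oplus\{l_i:A_i\}_{i\in I} \mid !A \mid @_\omega A \mid \forall\alpha.A \mid \exists\alpha.A \mid {\downarrow}\alpha.A$. An accessibility environment $\Omega$ is a finite set of hypotheses $\omega_1\prec\omega_2$; $\Omega\vdash\omega_1\prec\omega_2$ holds via the rule $\Omega,\omega_1\prec\omega_2\vdash\omega_1\prec\omega_2$; $\prec^*$ is its reflexive transitive closure; $\Omega\vdash\omega\prec^*\Delta$ means $\Omega\vdash\omega\prec^*\omega'$ for all $x{:}A[\omega']\in\Delta$. The judgment $\Omega;\Gamma;\Delta\vdash P::z{:}A[\omega]$ (unrestricted $\Gamma$, linear $\Delta$; typing closed under $\equiv$) is given by the rules: (id) $\Omega;\Gamma;x{:}A[\omega]\vdash[x\leftrightarrow z]::z{:}A[\omega]$. (1R) $\Omega;\Gamma;\cdot\vdash\mathbf 0::z{:}\mathbf 1[\omega]$. (1L) from $\Delta\vdash P::z{:}C[\omega_1]$ infer $\Delta,x{:}\mathbf 1[\omega_2]\vdash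 P::z{:}C[\omega_1]$. ($\multimap$R) from $\Delta,y{:}A[\omega]\vdash P::z{:}B[\omega]$ infer $\Delta\vdash z(y).P::z{:}A\multimap B[\omega]$. ($\multimap$L) from $\Delta_1\vdash P::y{:}A[\omega_2]$ and $\Delta_2,x{:}B[\omega_2]\vdash Q::z{:}C[\omega_1]$ infer $\Delta_1,\Delta_2,x{:}A\multimap B[\omega_2]\vdash\overline{x}\langle y\rangle.(P\mid Q)::z{:}C[\omega_1]$. ($\otimes$R) from $\Delta_1\vdash P::y{:}A[\omega]$, $\Delta_2\vdash Q::z{:}B[\omega]$ infer $\Delta_1,\Delta_2\vdash\overline{z}\langle y\rangle.(P\mid Q)::z{:}A\otimes B[\omega]$. ($\otimes$L) from $\Delta,y{:}A[\omega_2],x{:}B[\omega_2]\vdash P::z{:}C[\omega_1]$ infer $\Delta,x{:}A\otimes B[\omega_2]\vdash x(y).P::z{:}C[\omega_1]$. ($\&$R) from $\Delta\vdash P_i::z{:}A_i[\omega]$ ($i\in I$) infer $\Delta\vdash z\triangleright\{l_i:P_i\}::z{:}\&\{l_i:A_i\}[\omega]$. ($\&$L$_1$) from $\Delta,x{:}A[\omega_2]\vdash P::z{:}C[\omega_1]$ infer $\Delta,x{:}\&\{l_i:A\}[\omega_2]\vdash x\triangleleft l_i;P::z{:}C[\omega_1]$. ($\&$L$_2$) from $\Delta,x{:}\&\{l_i:A_i\}_{i\in I}[\omega_2]\vdash P::z{:}C[\omega_1]$, $k\notin I$, infer the same with $x{:}\&\{l_j:A_j\}_{j\in I\cup\{k\}}[\omega_2]$.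 ($\oplus$R$_1$) from $\Delta\vdash P::z{:}A[\omega]$ infer $\Delta\vdash z\triangleleft l_i;P::z{:}\oplus\{l_i:A\}[\omega]$. ($\oplus$R$_2$) from $\Delta\vdash P::z{:}\oplus\{l_i:A_i\}_{i\in I}[\omega]$, $k\notin I$, infer $\Delta\vdash P::z{:}\oplus\{l_j:A_j\}_{j\in I\cup\{k\}}[\omega]$. ($\oplus$L) from $\Delta,x{:}A_i[\omega_2]\vdash Q_i::z{:}C[\omega_1]$ ($i\in I$) infer $\Delta,x{:}\oplus\{l_i:A_i\}[\omega_2]\vdash x\triangleright\{l_i:Q_i\}::z{:}C[\omega_1]$. (!R) from $\Omega;\Gamma;\cdot\vdash Q::y{:}A[\omega]$ infer $\Omega;\Gamma;\cdot\vdash\overline{z}\langle u\rangle.!u(y).Q::z{:}!A[\omega]$. (!L) from $\Omega;\Gamma,u{:}A[\omega_2];\Delta\vdash P::z{:}C[\omega_1]$ infer $\Omega;\Gamma;\Delta,x{:}!A[\omega_2]\vdash x(u).P::z{:}C[\omega_1]$. (copy) from $\Omega\vdash\omega_1\prec^*\omega_2$ and $\Omega;\Gamma,u{:}A[\omega_2];\Delta,y{:}A[\omega_2]\vdash P::z{:}C[\omega_1]$ infer $\Omega;\Gamma,u{:}A[\omega_2];\Delta\vdash\overline{u}\langle y\rangle.P::z{:}C[\omega_1]$. (cut) from $\Omega\vdash\omega_1\prec^*\omega_2$, $\Omega\vdash\omega_2\prec^*\Delta_1$, $\Omega;\Gamma;\Delta_1\vdash P::x{:}A[\omega_2]$, $\Omega;\Gamma;\Delta_2,x{:}A[\omega_2]\vdash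 Q::z{:}C[\omega_1]$ infer $\Omega;\Gamma;\Delta_1,\Delta_2\vdash(\nu x)(P\mid Q)::z{:}C[\omega_1]$. (cut$^!$) from $\Omega;\Gamma;\cdot\vdash P::x{:}A[\omega_1]$ and $\Omega;\Gamma,u{:}A[\omega_1];\Delta\vdash Q::z{:}C[\omega_2]$ infer $\Omega;\Gamma;\Delta\vdash(\nu u)(!u(x).P\mid Q)::z{:}C[\omega_2]$. (@R) from $\Omega\vdash\omega_1\prec\omega_2$, $\Omega\vdash\omega_2\prec^*\Delta$, $\Omega;\Gamma;\Delta\vdash P::y{:}A[\omega_2]$ infer $\Omega;\Gamma;\Delta\vdash\overline{z}\langle y@\omega_2\rangle.P::z{:}@_{\omega_2}A[\omega_1]$. (@L) from $\Omega,\omega_2\prec\omega_3;\Gamma;\Delta,y{:}A[\omega_3]\vdash P::z{:}C[\omega_1]$ infer $\Omega;\Gamma;\Delta,x{:}@_{\omega_3}A[\omega_2]\vdash x(y@\omega_3).P::z{:}C[\omega_1]$. ($\forall$R) from $\Omega,\omega_1\prec\alpha;\Gamma;\Delta\vdash P::z{:}A[\omega_1]$, $\alpha$ fresh, infer $\Omega;\Gamma;\Delta\vdash z(\alpha).P::z{:}\forall\alpha.A[\omega_1]$. ($\forall$L) from $\Omega\vdash\omega_2\prec\omega_3$ and $\Omega;\Gamma;\Delta,x{:}A\{\omega_3/\alpha\}[\omega_2]\vdash Q::z{:}C[\omega_1]$ infer $\Omega;\Gamma;\Delta,x{:}\forall\alpha.A[\omega_2]\vdash x\langle\omega_3\rangle.Q::z{:}C[\omega_1]$.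 ($\exists$R) from $\Omega\vdash\omega_1\prec\omega_2$ and $\Omega;\Gamma;\Delta\vdash P::z{:}A\{\omega_2/\alpha\}[\omega_1]$ infer $\Omega;\Gamma;\Delta\vdash z\langle\omega_2\rangle.P::z{:}\exists\alpha.A[\omega_1]$. ($\exists$L) from $\Omega,\omega_2\prec\alpha;\Gamma;\Delta,x{:}A[\omega_2]\vdash Q::z{:}C[\omega_1]$ infer $\Omega;\Gamma;\Delta,x{:}\exists\alpha.A[\omega_2]\vdash x(\alpha).Q::z{:}C[\omega_1]$. (${\downarrow}$R) from $\Delta\vdash P::z{:}A\{\omega/\alpha\}[\omega]$ infer $\Delta\vdash P::z{:}{\downarrow}\alpha.A[\omega]$. (${\downarrow}$L) from $\Delta,x{:}A\{\omega/\alpha\}[\omega]\vdash P::z{:}C$ infer $\Delta,x{:}{\downarrow}\alpha.A[\omega]\vdash P::z{:}C$. *)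

(* Defs.v *)
From Stdlib Require Import List Arith Permutation Relations.
Import ListNotations.

Definition name := nat.
Definition dvar := nat.
Definition dtag := nat.
Definition label := nat.

Inductive dom : Type :=
| DTag (w : dtag)
| DVar (a : dvar).

Definition dom_fv (d : dom) : list dvar :=
  match d with DTag _ => [] | DVar a => [a] end.

Inductive proc : Type :=
| PZero
| PPar   (P Q : proc)
| PNu    (x : name) (P : proc)
| POut   (x y : name) (P : proc)
| PIn    (x y : name) (P : proc)                  (* x(y).P, binds y *)
| PRep   (x y : name) (P : proc)                  (* !x(y).P, binds y *)
| PFwd   (x y : name)
| PCase  (x : name) (bs : list (label * proc))
| PSel   (x : name) (l : label) (P : proc)
| POutAt (x y : name) (w : dom) (P : proc)
| PInAt  (x y : name) (w : dom) (P : proc)        (* x(y@w).P, binds y *)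
| POutD  (x : name) (w : dom) (P : proc)
| PInD   (x : name) (a : dvar) (P : proc).        (* x(a).P, binds a *)

Definition PBOut (x y : name) (P : proc) : proc := PNu y (POut x y P).
Definition PBOutAt (x y : name) (w : dom) (P : proc) : proc := PNu y (POutAt x y w P).

Fixpoint fn (P : proc) : list name :=
  match P with
  | PZero => []
  | PPar P Q => fn P ++ fn Q
  | PNu x P => remove Nat.eq_dec x (fn P)
  | POut x y P => x :: y :: fn P
  | PIn x y P => x :: remove Nat.eq_dec y (fn P)
  | PRep x y P => x :: remove Nat.eq_dec y (fn P)
  | PFwd x y => [x; y]
  | PCase x bs =>
      x :: (fix go (bs : list (label * proc)) : list name :=
              match bs with [] => [] | (_, Q) :: bs' => fn Q ++ go bs' end) bs
  | PSel x _ P => x :: fn P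
  | POutAt x y _ P => x :: y :: fn P
  | PInAt x y _ P => x :: remove Nat.eq_dec y (fn P)
  | POutD x _ P => x :: fn P
  | PInD x _ P => x :: fn P
  end.

Fixpoint names (P : proc) : list name :=
  match P with
  | PZero => []
  | PPar P Q => names P ++ names Q
  | PNu x P => x :: names P
  | POut x y P | PIn x y P | PRep x y P => x :: y :: names P
  | PFwd x y => [x; y]
  | PCase x bs =>
      x :: (fix go (bs : list (label * proc)) : list name :=
              match bs with [] => [] | (_, Q) :: bs' => names Q ++ go bs' end) bs
  | PSel x _ P => x :: names P
  | POutAt x y _ P | PInAt x y _ P => x :: y :: names P
  | POutD x _ P | PInD x _ P => x :: names P
  end.

Fixpoint bnames (P : proc) : list name :=
  match P with
  | PZero | PFwd _ _ => []
  | PPar P Q => bnames P ++ bnames Q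
  | PNu x P => x :: bnames P
  | PIn _ y P | PRep _ y P | PInAt _ y _ P => y :: bnames P
  | PCase _ bs =>
      (fix go (bs : list (label * proc)) : list name :=
         match bs with [] => [] | (_, Q) :: bs' => bnames Q ++ go bs' end) bs
  | POut _ _ P | PSel _ _ P | POutAt _ _ _ P | POutD _ _ P | PInD _ _ P => bnames P
  end.

Fixpoint dvars (P : proc) : list dvar :=
  match P with
  | PZero | PFwd _ _ => []
  | PPar P Q => dvars P ++ dvars Q
  | PNu _ P | POut _ _ P | PIn _ _ P | PRep _ _ P | PSel _ _ P => dvars P
  | PCase _ bs =>
      (fix go (bs : list (label * proc)) : list dvar :=
         match bs with [] => [] | (_, Q) :: bs' => dvars Q ++ go bs' end) bs
  | POutAt _ _ w P | PInAt _ _ w P | POutD _ w P => dom_fv w ++ dvars P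
  | PInD _ a P => a :: dvars P
  end.

Fixpoint bdvars (P : proc) : list dvar :=
  match P with
  | PZero | PFwd _ _ => []
  | PPar P Q => bdvars P ++ bdvars Q
  | PNu _ P | POut _ _ P | PIn _ _ P | PRep _ _ P | PSel _ _ P
  | POutAt _ _ _ P | PInAt _ _ _ P | POutD _ _ P => bdvars P
  | PCase _ bs =>
      (fix go (bs : list (label * proc)) : list dvar :=
         match bs with [] => [] | (_, Q) :: bs' => bdvars Q ++ go bs' end) bs
  | PInD _ a P => a :: bdvars P
  end.

(* P{y/x}: replace the free occurrences of x by y (no renaming of binders;
   it is only used under side conditions guaranteeing it is capture-free) *)
Fixpoint nsubst (y x : name) (P : proc) : proc :=
  let r n := if Nat.eqb n x then y else n in
  match P with
  | PZero => PZero
  | PPar P Q => PPar (nsubst y x P) (nsubst y x Q)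
  | PNu z P => PNu z (if Nat.eqb z x then P else nsubst y x P)
  | POut a b P => POut (r a) (r b) (nsubst y x P)
  | PIn a b P => PIn (r a) b (if Nat.eqb b x then P else nsubst y x P)
  | PRep a b P => PRep (r a) b (if Nat.eqb b x then P else nsubst y x P)
  | PFwd a b => PFwd (r a) (r b)
  | PCase a bs =>
      PCase (r a)
        ((fix go (bs : list (label * proc)) : list (label * proc) :=
            match bs with [] => [] | (l, Q) :: bs' => (l, nsubst y x Q) :: go bs' end) bs)
  | PSel a l P => PSel (r a) l (nsubst y x P)
  | POutAt a b w P => POutAt (r a) (r b) w (nsubst y x P)
  | PInAt a b w P => PInAt (r a) b w (if Nat.eqb b x then P else nsubst y x P)
  | POutD a w P => POutD (r a) w (nsubst y x P)
  | PInD a al P => PInD (r a) al (nsubst y x P)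
  end.

Definition dren (d : dom) (a : dvar) (w : dom) : dom :=
  match w with DVar b => if Nat.eqb b a then d else w | DTag _ => w end.

Fixpoint dsubst (d : dom) (a : dvar) (P : proc) : proc :=
  match P with
  | PZero => PZero
  | PPar P Q => PPar (dsubst d a P) (dsubst d a Q)
  | PNu z P => PNu z (dsubst d a P)
  | POut x y P => POut x y (dsubst d a P)
  | PIn x y P => PIn x y (dsubst d a P)
  | PRep x y P => PRep x y (dsubst d a P)
  | PFwd x y => PFwd x y
  | PCase x bs =>
      PCase x
        ((fix go (bs : list (label * proc)) : list (label * proc) :=
            match bs with [] => [] | (l, Q) :: bs' => (l, dsubst d a Q) :: go bs' end) bs)
  | PSel x l P => PSel x l (dsubst d a P)
  | POutAt x y w P => POutAt x y (dren d a w) (dsubst d a P)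
  | PInAt x y w P => PInAt x y (dren d a w) (dsubst d a P)
  | POutD x w P => POutD x (dren d a w) (dsubst d a P)
  | PInD x b P => PInD x b (if Nat.eqb b a then P else dsubst d a P)
  end.

(* Structural congruence: least congruence containing the axioms,
   alpha-conversion (of bound names and bound domain variables) included. *)
Inductive sc : proc -> proc -> Prop :=
| sc_refl P : sc P P
| sc_sym P Q : sc P Q -> sc Q P
| sc_trans P Q R : sc P Q -> sc Q R -> sc P R
| sc_par_l P P' Q : sc P P' -> sc (PPar P Q) (PPar P' Q)
| sc_par_r P Q Q' : sc Q Q' -> sc (PPar P Q) (PPar P Q')
| sc_nu x P P' : sc P P' -> sc (PNu x P) (PNu x P')
| sc_out x y P P' : sc P P' -> sc (POut x y P) (POut x y P')
| sc_in x y P P' : sc P P' -> sc (PIn x y P) (PIn x y P')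
| sc_rep x y P P' : sc P P' -> sc (PRep x y P) (PRep x y P')
| sc_case x bs1 bs2 l P P' :
    sc P P' -> sc (PCase x (bs1 ++ (l, P) :: bs2)) (PCase x (bs1 ++ (l, P') :: bs2))
| sc_sel x l P P' : sc P P' -> sc (PSel x l P) (PSel x l P')
| sc_outat x y w P P' : sc P P' -> sc (POutAt x y w P) (POutAt x y w P')
| sc_inat x y w P P' : sc P P' -> sc (PInAt x y w P) (PInAt x y w P')
| sc_outd x w P P' : sc P P' -> sc (POutD x w P) (POutD x w P')
| sc_cong_ind x a P P' : sc P P' -> sc (PInD x a P) (PInD x a P')
| sc_par_zero P : sc (PPar P PZero) P
| sc_alpha_nu x y P :
    ~ In y (names P) -> sc (PNu x P) (PNu y (nsubst y x P))
| sc_alpha_in a x y P :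
    ~ In y (names P) -> sc (PIn a x P) (PIn a y (nsubst y x P))
| sc_alpha_rep a x y P :
    ~ In y (names P) -> sc (PRep a x P) (PRep a y (nsubst y x P))
| sc_alpha_inat a x y w P :
    ~ In y (names P) -> sc (PInAt a x w P) (PInAt a y w (nsubst y x P))
| sc_alpha_ind a al be P :
    ~ In be (dvars P) -> sc (PInD a al P) (PInD a be (dsubst (DVar be) al P))
| sc_nu_zero x : sc (PNu x PZero) PZero
| sc_fwd x y : sc (PFwd x y) (PFwd y x)
| sc_par_comm P Q : sc (PPar P Q) (PPar Q P)
| sc_par_assoc P Q R : sc (PPar (PPar P Q) R) (PPar P (PPar Q R))
| sc_extr x P Q : ~ In x (fn P) -> sc (PPar P (PNu x Q)) (PNu x (PPar P Q))
| sc_nu_swap x y P : sc (PNu x (PNu y P)) (PNu y (PNu x P)).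

(* Reduction.  Substitutions are required to be capture-free; since
   reduction is closed under sc (which contains alpha-conversion), bound
   names can always be renamed first. *)
Inductive red : proc -> proc -> Prop :=
| red_comm x y z Q P :
    ~ In y (bnames P) ->
    red (PPar (POut x y Q) (PIn x z P)) (PPar Q (nsubst y z P))
| red_rep x y z Q P :
    ~ In y (bnames P) ->
    red (PPar (POut x y Q) (PRep x z P)) (PPar (PPar Q (nsubst y z P)) (PRep x z P))
| red_at x y z w w' P Q :
    ~ In y (bnames Q) ->
    red (PPar (POutAt x y w P) (PInAt x z w' Q)) (PPar P (nsubst y z Q))
| red_dom x w a P Q :
    (forall b, In b (dom_fv w) -> ~ In b (bdvars Q)) ->
    red (PPar (POutD x w P) (PInD x a Q)) (PPar P (dsubst w a Q))
| red_fwd x y P :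
    ~ In y (bnames P) ->
    red (PNu x (PPar (PFwd x y) P)) (nsubst y x P)
| red_case x l P bs Qj :
    In (l, Qj) bs ->
    red (PPar (PSel x l P) (PCase x bs)) (PPar P Qj)
| red_par P P' Q : red P P' -> red (PPar P Q) (PPar P' Q)
| red_nu x P P' : red P P' -> red (PNu x P) (PNu x P')
| red_sc P P' Q' Q : sc P P' -> red P' Q' -> sc Q' Q -> red P Q.

Fixpoint nus (ns : list name) (P : proc) : proc :=
  match ns with [] => P | x :: ns' => PNu x (nus ns' P) end.

Definition guarded (P : proc) : Prop :=
  match P with
  | POut _ _ _ | PIn _ _ _ | PCase _ _ | PSel _ _ _
  | POutAt _ _ _ _ | PInAt _ _ _ _ | POutD _ _ _ | PInD _ _ _ => True
  | _ => False
  end.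

Definition live (P : proc) : Prop :=
  exists (ns : list name) (G R : proc),
    guarded G /\ sc P (nus ns (PPar G R)).

(* Domain variables bound by forall/exists/down are
   represented locally-nameless (de Bruijn indices TB), so A{w/alpha} is
   the opening operation and no alpha-conversion on types is needed. *)
Inductive tdom : Type :=
| TD (d : dom)
| TB (n : nat).

Inductive stype : Type :=
| TOne
| TLolli  (A B : stype)
| TTensor (A B : stype)
| TWith   (bs : list (label * stype))
| TPlus   (bs : list (label * stype))
| TBang   (A : stype)
| TAt     (d : tdom) (A : stype)
| TAll    (A : stype)
| TEx     (A : stype)
| TDown   (A : stype).

Definition open_td (k : nat) (d : dom) (t : tdom) : tdom :=
  match t with TB n => if Nat.eqb n k then TD d else t | TD _ => t end.

Fixpoint open_rec (k : nat) (d : dom) (A : stype) : stype :=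
  match A with
  | TOne => TOne
  | TLolli A B => TLolli (open_rec k d A) (open_rec k d B)
  | TTensor A B => TTensor (open_rec k d A) (open_rec k d B)
  | TWith bs =>
      TWith ((fix go (bs : list (label * stype)) :=
                match bs with [] => [] | (l, B) :: bs' => (l, open_rec k d B) :: go bs' end) bs)
  | TPlus bs =>
      TPlus ((fix go (bs : list (label * stype)) :=
                match bs with [] => [] | (l, B) :: bs' => (l, open_rec k d B) :: go bs' end) bs)
  | TBang A => TBang (open_rec k d A)
  | TAt t A => TAt (open_td k d t) (open_rec k d A)
  | TAll A => TAll (open_rec (S k) d A)
  | TEx A => TEx (open_rec (S k) d A)
  | TDown A => TDown (open_rec (S k) d A)
  end.

Definition open (A : stype) (d : dom) : stype := open_rec 0 d A.

Definition tdom_fv (t : tdom) : list dvar :=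
  match t with TD d => dom_fv d | TB _ => [] end.

Fixpoint ty_fv (A : stype) : list dvar :=
  match A with
  | TOne => []
  | TLolli A B | TTensor A B => ty_fv A ++ ty_fv B
  | TWith bs | TPlus bs =>
      (fix go (bs : list (label * stype)) :=
         match bs with [] => [] | (_, B) :: bs' => ty_fv B ++ go bs' end) bs
  | TBang A | TAll A | TEx A | TDown A => ty_fv A
  | TAt t A => tdom_fv t ++ ty_fv A
  end.

Definition accenv := list (dom * dom).
Definition acc (O : accenv) (w1 w2 : dom) : Prop := In (w1, w2) O.
Definition reach (O : accenv) : dom -> dom -> Prop :=
  clos_refl_trans dom (acc O).

Definition ctx := list (name * (stype * dom)).

Definition reach_ctx (O : accenv) (w : dom) (D : ctx) : Prop :=
  forall x A w', In (x, (A, w')) D -> reach O w w'.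

Definition ctx_fv (G : ctx) : list dvar :=
  flat_map (fun e => ty_fv (fst (snd e)) ++ dom_fv (snd (snd e))) G.
Definition accenv_fv (O : accenv) : list dvar :=
  flat_map (fun p => dom_fv (fst p) ++ dom_fv (snd p)) O.

(* the judgment  O; G; D |- P :: z:A[w]  is formed only when the names of
   G, D and z are pairwise distinct *)
Definition wfj (G D : ctx) (z : name) : Prop :=
  NoDup (z :: map fst G ++ map fst D).

Definition fresh_j (y : name) (G D : ctx) (z : name) : Prop :=
  ~ In y (z :: map fst G ++ map fst D).

(* Typing:  typed O G D P z A w   stands for   O; G; D |- P :: z:A[w] *)
Inductive typed : accenv -> ctx -> ctx -> proc -> name -> stype -> dom -> Prop :=
| T_id O G x z A w :
    wfj G [(x, (A, w))] z ->
    typed O G [(x, (A, w))] (PFwd x z) z A w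
| T_1R O G z w :
    wfj G [] z ->
    typed O G [] PZero z TOne w
| T_1L O G D P z C w1 x w2 :
    typed O G D P z C w1 ->
    wfj G ((x, (TOne, w2)) :: D) z ->
    typed O G ((x, (TOne, w2)) :: D) P z C w1
| T_lolliR O G D y A B P z w :
    typed O G ((y, (A, w)) :: D) P z B w ->
    wfj G D z ->
    typed O G D (PIn z y P) z (TLolli A B) w
| T_lolliL O G D1 D2 P y A w2 Q x B z C w1 :
    typed O G D1 P y A w2 ->
    typed O G ((x, (B, w2)) :: D2) Q z C w1 ->
    fresh_j y G ((x, (TLolli A B, w2)) :: D1 ++ D2) z ->
    wfj G ((x, (TLolli A B, w2)) :: D1 ++ D2) z ->
    typed O G ((x, (TLolli A B, w2)) :: D1 ++ D2) (PBOut x y (PPar P Q)) z C w1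
| T_tensorR O G D1 D2 P y A Q z B w :
    typed O G D1 P y A w ->
    typed O G D2 Q z B w ->
    fresh_j y G (D1 ++ D2) z ->
    wfj G (D1 ++ D2) z ->
    typed O G (D1 ++ D2) (PBOut z y (PPar P Q)) z (TTensor A B) w
| T_tensorL O G D y A x B P z C w1 w2 :
    typed O G ((y, (A, w2)) :: (x, (B, w2)) :: D) P z C w1 ->
    wfj G ((x, (TTensor A B, w2)) :: D) z ->
    typed O G ((x, (TTensor A B, w2)) :: D) (PIn x y P) z C w1
| T_withR O G D (ps : list (label * proc)) (bs : list (label * stype)) z w :
    NoDup (map fst bs) ->
    Permutation (map fst ps) (map fst bs) ->
    (forall l P A, In (l, P) ps -> In (l, A) bs -> typed O G D P z A w) ->
    wfj G D z ->
    typed O G D (PCase z ps) z (TWith bs) w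
| T_withL1 O G D x l A w2 P z C w1 :
    typed O G ((x, (A, w2)) :: D) P z C w1 ->
    wfj G ((x, (TWith [(l, A)], w2)) :: D) z ->
    typed O G ((x, (TWith [(l, A)], w2)) :: D) (PSel x l P) z C w1
| T_withL2 O G D x bs bs' k Ak w2 P z C w1 :
    typed O G ((x, (TWith bs, w2)) :: D) P z C w1 ->
    ~ In k (map fst bs) ->
    Permutation bs' ((k, Ak) :: bs) ->
    typed O G ((x, (TWith bs', w2)) :: D) P z C w1
| T_plusR1 O G D P z l A w :
    typed O G D P z A w ->
    wfj G D z ->
    typed O G D (PSel z l P) z (TPlus [(l, A)]) w
| T_plusR2 O G D P z bs bs' k Ak w :
    typed O G D P z (TPlus bs) w ->
    ~ In k (map fst bs) ->
    Permutation bs' ((k, Ak) :: bs) ->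
    typed O G D P z (TPlus bs') w
| T_plusL O G D x (qs : list (label * proc)) (bs : list (label * stype)) w2 z C w1 :
    NoDup (map fst bs) ->
    Permutation (map fst qs) (map fst bs) ->
    (forall l Q A, In (l, Q) qs -> In (l, A) bs ->
                   typed O G ((x, (A, w2)) :: D) Q z C w1) ->
    wfj G ((x, (TPlus bs, w2)) :: D) z ->
    typed O G ((x, (TPlus bs, w2)) :: D) (PCase x qs) z C w1
| T_bangR O G Q y A w z u :
    typed O G [] Q y A w ->
    fresh_j u G [] z ->
    wfj G [] z ->
    typed O G [] (PBOut z u (PRep u y Q)) z (TBang A) w
| T_bangL O G u A w2 D P z C w1 x :
    typed O ((u, (A, w2)) :: G) D P z C w1 ->
    wfj G ((x, (TBang A, w2)) :: D) z ->
    typed O G ((x, (TBang A, w2)) :: D) (PIn x u P) z C w1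
| T_copy O G u A w2 D y P z C w1 :
    In (u, (A, w2)) G ->
    reach O w1 w2 ->
    typed O G ((y, (A, w2)) :: D) P z C w1 ->
    wfj G D z ->
    typed O G D (PBOut u y P) z C w1
| T_cut O G D1 D2 P x A w2 Q z C w1 :
    reach O w1 w2 ->
    reach_ctx O w2 D1 ->
    typed O G D1 P x A w2 ->
    typed O G ((x, (A, w2)) :: D2) Q z C w1 ->
    wfj G (D1 ++ D2) z ->
    typed O G (D1 ++ D2) (PNu x (PPar P Q)) z C w1
| T_cutbang O G P x A w1 u D Q z C w2 :
    typed O G [] P x A w1 ->
    typed O ((u, (A, w1)) :: G) D Q z C w2 ->
    wfj G D z ->
    typed O G D (PNu u (PPar (PRep u x P) Q)) z C w2
| T_atR O G D P y A w1 w2 z :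
    acc O w1 w2 ->
    reach_ctx O w2 D ->
    typed O G D P y A w2 ->
    fresh_j y G D z ->
    wfj G D z ->
    typed O G D (PBOutAt z y w2 P) z (TAt (TD w2) A) w1
| T_atL O G D x y A w2 w3 P z C w1 :
    typed ((w2, w3) :: O) G ((y, (A, w3)) :: D) P z C w1 ->
    wfj G ((x, (TAt (TD w3) A, w2)) :: D) z ->
    typed O G ((x, (TAt (TD w3) A, w2)) :: D) (PInAt x y w3 P) z C w1
| T_allR O G D P z A w1 a :
    typed ((w1, DVar a) :: O) G D P z (open A (DVar a)) w1 ->
    ~ In a (accenv_fv O ++ ctx_fv G ++ ctx_fv D ++ dom_fv w1 ++ ty_fv A) ->
    wfj G D z ->
    typed O G D (PInD z a P) z (TAll A) w1
| T_allL O G D x A w2 w3 Q z C w1 :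
    acc O w2 w3 ->
    typed O G ((x, (open A w3, w2)) :: D) Q z C w1 ->
    wfj G ((x, (TAll A, w2)) :: D) z ->
    typed O G ((x, (TAll A, w2)) :: D) (POutD x w3 Q) z C w1
| T_exR O G D P z A w1 w2 :
    acc O w1 w2 ->
    typed O G D P z (open A w2) w1 ->
    wfj G D z ->
    typed O G D (POutD z w2 P) z (TEx A) w1
| T_exL O G D x A w2 Q z C w1 a :
    typed ((w2, DVar a) :: O) G ((x, (open A (DVar a), w2)) :: D) Q z C w1 ->
    ~ In a (accenv_fv O ++ ctx_fv G ++ ctx_fv D ++ dom_fv w1 ++ dom_fv w2
            ++ ty_fv A ++ ty_fv C) ->
    wfj G ((x, (TEx A, w2)) :: D) z ->
    typed O G ((x, (TEx A, w2)) :: D) (PInD x a Q) z C w1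
| T_downR O G D P z A w :
    typed O G D P z (open A w) w ->
    typed O G D P z (TDown A) w
| T_downL O G D x A w P z C w1 :
    typed O G ((x, (open A w, w)) :: D) P z C w1 ->
    typed O G ((x, (TDown A, w)) :: D) P z C w1
(* contexts are (multi)sets: exchange *)
| T_perm O G G' D D' P z A w :
    Permutation G G' -> Permutation D D' ->
    typed O G D P z A w -> typed O G' D' P z A w
| T_sc O G D P Q z A w :
    sc P Q -> typed O G D Q z A w -> typed O G D P z A w.

(* Main.v *)
Require Import Defs.
From Stdlib Require Import List Arith Lia Permutation Relations Bool.
Import ListNotations.

Definition proc_rect2 (Pr : proc -> Prop)
 (h0 : Pr PZero)
 (hpar : forall P Q, Pr P -> Pr Q -> Pr (PPar P Q))
 (hnu : forall x P, Pr P -> Pr (PNu x P))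
 (hout : forall x y P, Pr P -> Pr (POut x y P))
 (hin : forall x y P, Pr P -> Pr (PIn x y P))
 (hrep : forall x y P, Pr P -> Pr (PRep x y P))
 (hfwd : forall x y, Pr (PFwd x y))
 (hcase : forall x bs, Forall (fun p => Pr (snd p)) bs -> Pr (PCase x bs))
 (hsel : forall x l P, Pr P -> Pr (PSel x l P))
 (houtat : forall x y w P, Pr P -> Pr (POutAt x y w P))
 (hinat : forall x y w P, Pr P -> Pr (PInAt x y w P))
 (houtd : forall x w P, Pr P -> Pr (POutD x w P))
 (hind : forall x a P, Pr P -> Pr (PInD x a P)) : forall P, Pr P :=
 fix F P := match P as P0 return Pr P0 with
 | PZero => h0
 | PPar P Q => hpar P Q (F P) (F Q)
 | PNu x P => hnu x P (F P)
 | POut x y P => hout x y P (F P)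
 | PIn x y P => hin x y P (F P)
 | PRep x y P => hrep x y P (F P)
 | PFwd x y => hfwd x y
 | PCase x bs => hcase x bs ((fix G (bs : list (label*proc)) : Forall (fun p => Pr (snd p)) bs :=
        match bs with [] => Forall_nil _ | p :: bs' => Forall_cons p (F (snd p)) (G bs') end) bs)
 | PSel x l P => hsel x l P (F P)
 | POutAt x y w P => houtat x y w P (F P)
 | PInAt x y w P => hinat x y w P (F P)
 | POutD x w P => houtd x w P (F P)
 | PInD x a P => hind x a P (F P)
 end.

Lemma fn_case x bs : fn (PCase x bs) = x :: flat_map (fun p => fn (snd p)) bs.
Proof. induction bs as [|[l Q] bs IH]; simpl; auto. simpl in IH. injection IH as IH. rewrite IH. auto. Qed.
Lemma names_case x bs : names (PCase x bs) = x :: flat_map (fun p => names (snd p)) bs.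
Proof. induction bs as [|[l Q] bs IH]; simpl; auto. simpl in IH. injection IH as IH. rewrite IH. auto. Qed.
Lemma bnames_case x bs : bnames (PCase x bs) = flat_map (fun p => bnames (snd p)) bs.
Proof. induction bs as [|[l Q] bs IH]; simpl; auto. simpl in IH. rewrite IH. auto. Qed.
Lemma dvars_case x bs : dvars (PCase x bs) = flat_map (fun p => dvars (snd p)) bs.
Proof. induction bs as [|[l Q] bs IH]; simpl; auto. simpl in IH. rewrite IH. auto. Qed.
Lemma bdvars_case x bs : bdvars (PCase x bs) = flat_map (fun p => bdvars (snd p)) bs.
Proof. induction bs as [|[l Q] bs IH]; simpl; auto. simpl in IH. rewrite IH. auto. Qed.
Lemma nsubst_case y x a bs : nsubst y x (PCase a bs) =
  PCase (if Nat.eqb a x then y else a) (map (fun p => (fst p, nsubst y x (snd p))) bs).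
Proof. induction bs as [|[l Q] bs IH]; simpl; auto. simpl in IH. injection IH as IH. rewrite IH. auto. Qed.
Lemma dsubst_case d al a bs : dsubst d al (PCase a bs) =
  PCase a (map (fun p => (fst p, dsubst d al (snd p))) bs).
Proof. induction bs as [|[l Q] bs IH]; simpl; auto. simpl in IH. injection IH as IH. rewrite IH. auto. Qed.

Lemma bnames_nsubst y x P : bnames (nsubst y x P) = bnames P.
Proof.
  induction P using proc_rect2.
  8: { rewrite nsubst_case, !bnames_case. induction H; simpl; auto. rewrite H, IHForall. auto. }
  all: simpl; auto; try (destruct (Nat.eqb _ x); simpl; congruence); try congruence.
Qed.

Lemma bdvars_nsubst y x P : bdvars (nsubst y x P) = bdvars P.
Proof.
  induction P using proc_rect2.
  8: { rewrite nsubst_case, !bdvars_case. induction H; simpl; auto. rewrite H, IHForall. auto. }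
  all: simpl; auto; try (destruct (Nat.eqb _ x); simpl; congruence); try congruence.
Qed.

Lemma bnames_dsubst d a P : bnames (dsubst d a P) = bnames P.
Proof.
  induction P using proc_rect2.
  8: { rewrite dsubst_case, !bnames_case. induction H; simpl; auto. rewrite H, IHForall. auto. }
  all: simpl; auto; try (destruct (Nat.eqb _ a); simpl; congruence); try congruence.
Qed.

Lemma bdvars_dsubst d a P : bdvars (dsubst d a P) = bdvars P.
Proof.
  induction P using proc_rect2.
  8: { rewrite dsubst_case, !bdvars_case. induction H; simpl; auto. rewrite H, IHForall. auto. }
  all: simpl; auto; try (destruct (Nat.eqb _ a); simpl; congruence); try congruence.
Qed.

Lemma fn_dsubst d a P : fn (dsubst d a P) = fn P.
Proof.
  induction P using proc_rect2.
  8: { rewrite dsubst_case, !fn_case. f_equal. induction H; simpl; auto. rewrite H, IHForall. auto. }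
  all: simpl; auto; try (destruct (Nat.eqb _ a); simpl; congruence); try congruence.
Qed.

Fixpoint tl (P : proc) : bool :=
  match P with
  | PPar P Q => tl P || tl Q
  | PNu _ P => tl P
  | PZero | PRep _ _ _ | PFwd _ _ => false
  | _ => true
  end.

Lemma tl_nsubst y x P : tl (nsubst y x P) = tl P.
Proof.
  induction P; simpl; auto; try congruence;
  try (destruct (Nat.eqb _ _); auto; fail); try (destruct bs as [|[]]; simpl; auto).
Qed.

Lemma tl_dsubst d a P : tl (dsubst d a P) = tl P.
Proof.
  induction P; simpl; auto; try congruence;
  try (destruct bs as [|[]]; simpl; auto).
Qed.

Lemma fn_names P n : In n (fn P) -> In n (names P).
Proof.
  revert n. induction P using proc_rect2; intros n Hn.
  8: { rewrite fn_case in Hn. rewrite names_case. destruct Hn as [Hn|Hn]; [left; auto|right].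
       induction H; simpl in *; auto. apply in_app_iff in Hn. apply in_app_iff. destruct Hn; auto. }
  all: simpl in *; auto;
    repeat match goal with
    | H : In _ (_ ++ _) |- _ => apply in_app_iff in H
    | H : In _ (remove _ _ _) |- _ => apply in_remove in H
    | H : _ /\ _ |- _ => destruct H
    | H : _ \/ _ |- _ => destruct H
    end; subst; auto; rewrite ?in_app_iff; auto.
Qed.

Ltac inv_in :=
  repeat match goal with
    | H : In _ (_ ++ _) |- _ => apply in_app_iff in H
    | H : In _ (remove _ _ _) |- _ => apply in_remove in H
    | H : _ /\ _ |- _ => destruct H
    | H : _ \/ _ |- _ => destruct H
    | H : In _ (_ :: _) |- _ => destruct H
    | H : In _ [] |- _ => destruct H
    end.

Lemma in_remove_iff a b l : In a (remove Nat.eq_dec b l) <-> In a l /\ a <> b.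
Proof. split; [apply in_remove | intros []; apply in_in_remove; auto]. Qed.

Ltac destr_eqb := repeat match goal with
 | H : context [Nat.eqb ?a ?b] |- _ => destruct (Nat.eqb_spec a b)
 | |- context [Nat.eqb ?a ?b] => destruct (Nat.eqb_spec a b) end.

Lemma fn_nsubst1 y x P n : In n (fn (nsubst y x P)) -> n = y \/ (In n (fn P) /\ n <> x).
Proof.
  revert n. induction P using proc_rect2; intros n Hn.
  8: { rewrite nsubst_case, fn_case in Hn. rewrite fn_case. simpl in Hn. destruct Hn as [Hn|Hn].
       { destruct (Nat.eqb_spec x0 x); subst; auto. right; split; simpl; auto. }
       induction H; simpl in *; [contradiction|]. apply in_app_iff in Hn. destruct Hn as [Hn|Hn].
       - destruct (H _ Hn) as [|[]]; auto. right; split; auto. right. apply in_app_iff; auto.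
       - destruct (IHForall Hn) as [|[]]; auto. right; split; auto. destruct H1; [left; auto|right; apply in_app_iff; auto]. }
  all: simpl in *; destr_eqb; subst; simpl in *; rewrite ?in_app_iff, ?in_remove_iff in *.
  all: repeat match goal with H : _ \/ _ |- _ => destruct H | H : _ /\ _ |- _ => destruct H end.
  all: repeat match goal with IH : forall n, In n (fn (nsubst _ _ ?P)) -> _, H : In ?m (fn (nsubst _ _ ?P)) |- _ => apply IH in H end.
  all: intuition congruence.
Qed.

Lemma fn_nsubst2 y x P n : In n (fn P) -> n <> x -> In n (fn (nsubst y x P)).
Proof.
  revert n. induction P using proc_rect2; intros n Hn Hnx.
  8: { rewrite nsubst_case, fn_case. rewrite fn_case in Hn. simpl in Hn. destruct Hn as [Hn|Hn].
       { subst. destruct (Nat.eqb_spec n x); subst; [congruence|]. left; auto. }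
       right. induction H; simpl in *; [contradiction|]. apply in_app_iff in Hn. apply in_app_iff. destruct Hn as [Hn|Hn]; auto. }
  all: simpl in *; destr_eqb; subst; simpl in *; rewrite ?in_app_iff, ?in_remove_iff in *.
  all: repeat match goal with H : _ \/ _ |- _ => destruct H | H : _ /\ _ |- _ => destruct H end.
  all: try (intuition congruence; fail).
  all: repeat match goal with IH : forall n, In n (fn ?P) -> _ -> In n (fn (nsubst _ _ ?P)), H : In ?m (fn ?P) |- _ => 
         let H' := fresh in assert (H' := IH _ H); clear H end.
  all: intuition congruence.
Qed.

Lemma alpha_fn_iff x y P n : ~ In y (names P) ->
  (In n (remove Nat.eq_dec x (fn P)) <-> In n (remove Nat.eq_dec y (fn (nsubst y x P)))).
Proof.
  intros Hy. rewrite !in_remove_iff. split.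
  - intros [H1 H2]. split. apply fn_nsubst2; auto. intro; subst. apply Hy, fn_names; auto.
  - intros [H1 H2]. destruct (fn_nsubst1 _ _ _ _ H1) as [|[]]; auto. congruence.
Qed.

Lemma sc_fn P Q : sc P Q -> forall n, In n (fn P) <-> In n (fn Q).
Proof.
  induction 1; intros n; try rewrite !fn_case; simpl;
    rewrite ?flat_map_app, ?in_app_iff, ?in_remove_iff; simpl; rewrite ?in_app_iff, ?in_remove_iff.
  all: try (match goal with H : ~ In ?y (names ?P) |- context [nsubst ?y ?x ?P] => 
            pose proof (alpha_fn_iff x y P n H) as HA; rewrite !in_remove_iff in HA end).
  all: try rewrite fn_dsubst.
  all: repeat match goal with IH : forall n, In n (fn _) <-> In n (fn _) |- _ => specialize (IH n) end.
  all: try (intuition congruence; fail).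
  all: try tauto.
Qed.

Lemma sc_tl P Q : sc P Q -> tl P = tl Q.
Proof.
  induction 1; simpl; rewrite ?tl_nsubst, ?tl_dsubst; auto; try congruence.
  - apply orb_false_r.
  - apply orb_comm.
  - symmetry; apply orb_assoc.
Qed.

Lemma fresh_ex (l : list nat) : exists n, ~ In n l.
Proof.
  exists (S (fold_right max 0 l)).
  assert (forall n, In n l -> n <= fold_right max 0 l).
  { induction l; simpl; intros n []; subst; try lia. specialize (IHl _ H). lia. }
  intro Hin. apply H in Hin. lia.
Qed.

Lemma bnames_nus ns X : bnames (nus ns X) = ns ++ bnames X.
Proof. induction ns; simpl; congruence. Qed.
Lemma names_nus ns X : names (nus ns X) = ns ++ names X.
Proof. induction ns; simpl; congruence. Qed.
Lemma bdvars_nus ns X : bdvars (nus ns X) = bdvars X.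
Proof. induction ns; simpl; congruence. Qed.
Lemma dvars_nus ns X : dvars (nus ns X) = dvars X.
Proof. induction ns; simpl; congruence. Qed.
Lemma nsubst_nus b a ns X : ~ In a ns -> nsubst b a (nus ns X) = nus ns (nsubst b a X).
Proof.
  induction ns; simpl; auto. intros H. destruct (Nat.eqb_spec a0 a); [exfalso; auto|].
  rewrite IHns; auto.
Qed.
Lemma sc_nus ns X Y : sc X Y -> sc (nus ns X) (nus ns Y).
Proof. intros H; induction ns; simpl; auto. apply sc_nu; auto. Qed.
Lemma red_nus ns X Y : red X Y -> red (nus ns X) (nus ns Y).
Proof. intros H; induction ns; simpl; auto. apply red_nu; auto. Qed.
Lemma fn_nus ns X n : In n (fn X) -> In n ns \/ In n (fn (nus ns X)).
Proof.
  induction ns; simpl; auto. intros H. destruct (IHns H); auto.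
  destruct (Nat.eq_dec n a); auto. right. apply in_in_remove; auto.
Qed.
Lemma sc_extr_nus ns X Y : (forall m, In m ns -> ~ In m (fn X)) ->
  sc (PPar X (nus ns Y)) (nus ns (PPar X Y)).
Proof.
  induction ns; simpl; intros H. apply sc_refl.
  eapply sc_trans. apply sc_extr. auto. apply sc_nu. auto.
Qed.
Lemma sc_extr_nus_l ns X Y : (forall m, In m ns -> ~ In m (fn X)) ->
  sc (PPar (nus ns Y) X) (nus ns (PPar Y X)).
Proof.
  intros H. eapply sc_trans. apply sc_par_comm. eapply sc_trans. apply sc_extr_nus; auto.
  apply sc_nus. apply sc_par_comm.
Qed.
Lemma sc_nu_nus x ns X : sc (PNu x (nus ns X)) (nus ns (PNu x X)).
Proof.
  induction ns; simpl. apply sc_refl.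
  eapply sc_trans. apply sc_nu_swap. apply sc_nu. auto.
Qed.

Definition avoid (S : list name) (Sd : list dvar) (X : proc) : Prop :=
  (forall n, In n S -> ~ In n (bnames X)) /\ (forall a, In a Sd -> ~ In a (bdvars X)).

Inductive pk := KOut | KIn | KSel (ls : list label) | KCase (ls : list label)
  | KOutAt | KInAt | KOutD | KInD | KFwd (y : name).

Definition shape (k : pk) (n : name) (G : proc) : Prop :=
 match k with
 | KOut => exists y B, G = POut n y B
 | KIn => exists z B, G = PIn n z B
 | KSel ls => exists l B, G = PSel n l B /\ In l ls
 | KCase ls => exists bs, G = PCase n bs /\ (forall l, In l ls -> In l (map fst bs))
 | KOutAt => exists y w B, G = POutAt n y w B
 | KInAt => exists z w B, G = PInAt n z w B
 | KOutD => exists w B, G = POutD n w B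
 | KInD => exists a B, G = PInD n a B
 | KFwd y => G = PFwd y n
 end.

Definition knames (k : pk) (n : name) : list name :=
  match k with KFwd y => [y; n] | _ => [n] end.

Lemma map_fst_nsubst y x bs :
  map fst (map (fun p : label * proc => (fst p, nsubst y x (snd p))) bs) = map fst bs.
Proof. rewrite map_map. reflexivity. Qed.

Lemma shape_nsubst k n G y x : shape k n G -> (forall m, In m (knames k n) -> m <> x) ->
  shape k n (nsubst y x G).
Proof.
  intros Hs Hk. assert (Hn : n <> x) by (apply Hk; destruct k; simpl; auto).
  destruct k; simpl in Hs |- *;
  repeat match goal with H : exists _, _ |- _ => destruct H | H : _ /\ _ |- _ => destruct H end; subst;
  try rewrite nsubst_case; simpl;
  try (destruct (Nat.eqb_spec n x); [congruence|]); eauto.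
  - exists (map (fun p : label * proc => (fst p, nsubst y x (snd p))) x0). split; auto. rewrite map_fst_nsubst. auto.
  - assert (y0 <> x) by (apply Hk; simpl; auto).
    destruct (Nat.eqb_spec y0 x); [congruence|]. auto.
Qed.

Ltac avoid_tac := match goal with Hx : forall n, In n ?S -> ~ In n ?X, Hs : In ?a ?S, Hb : In ?a ?X |- False => exact (Hx a Hs Hb) end.

Lemma avoid_nsubst S Sd y x P : avoid S Sd P -> avoid S Sd (nsubst y x P).
Proof. unfold avoid. rewrite bnames_nsubst, bdvars_nsubst. auto. Qed.

Lemma alpha_list x bs S Sd :
  Forall (fun p => forall S Sd, exists P', sc (snd p) P' /\ avoid S Sd P' /\
            (forall k n, shape k n (snd p) -> shape k n P')) bs ->
  exists bs', map fst bs' = map fst bs /\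
    (forall pre, sc (PCase x (pre ++ bs)) (PCase x (pre ++ bs'))) /\ avoid S Sd (PCase x bs').
Proof.
  induction 1.
  - exists []. split; auto. split. intros; apply sc_refl. split; simpl; auto.
  - destruct IHForall as (bs' & H1 & H2 & H3). destruct x0 as [lb Q].
    destruct (H S Sd) as (Q' & HQ1 & HQ2 & _).
    exists ((lb,Q') :: bs'). simpl. split. congruence. split.
    + intros pre. eapply sc_trans. apply sc_case. exact HQ1.
      specialize (H2 (pre ++ [(lb,Q')])). rewrite <- !app_assoc in H2. exact H2.
    + unfold avoid in *. rewrite bnames_case, bdvars_case in *. simpl.
      destruct HQ2, H3. split; intros; rewrite in_app_iff; intros []; avoid_tac.
Qed.

Ltac dex := repeat match goal with H : exists _, _ |- _ => destruct H | H : _ /\ _ |- _ => destruct H end.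

Lemma alpha P : forall S Sd, exists P', sc P P' /\ avoid S Sd P' /\ (forall k n, shape k n P -> shape k n P').
Proof.
  induction P using proc_rect2; intros S Sd.
  - exists PZero. repeat split; try apply sc_refl; simpl; auto.
  - destruct (IHP1 S Sd) as (P1' & A1 & B1 & _). destruct (IHP2 S Sd) as (P2' & A2 & B2 & _).
    exists (PPar P1' P2'). split. eapply sc_trans. apply sc_par_l. eauto. apply sc_par_r. eauto.
    split. unfold avoid in *; simpl; dex; split; intros; rewrite in_app_iff; intros []; avoid_tac.
    intros k n Hs; destruct k; simpl in Hs; dex; discriminate.
  - destruct (IHP S Sd) as (P0 & A0 & B0 & _).
    destruct (fresh_ex (S ++ names P0)) as [y Hy]. rewrite in_app_iff in Hy.
    exists (PNu y (nsubst y x P0)). split. eapply sc_trans. apply sc_nu. eauto. apply sc_alpha_nu. tauto.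
    split. unfold avoid in *; simpl; rewrite bnames_nsubst, bdvars_nsubst; dex; split; intros; auto.
    intros []; subst; [tauto|avoid_tac].
    intros k n Hs; destruct k; simpl in Hs; dex; discriminate.
  - destruct (IHP S Sd) as (P0 & A0 & B0 & _).
    exists (POut x y P0). split. apply sc_out; auto. split. unfold avoid in *; simpl; auto.
    intros k n Hs; destruct k; simpl in Hs |- *; dex; try discriminate. injection H; intros; subst; eauto.
  - destruct (IHP S Sd) as (P0 & A0 & B0 & _).
    destruct (fresh_ex (S ++ names P0)) as [y' Hy]. rewrite in_app_iff in Hy.
    exists (PIn x y' (nsubst y' y P0)). split. eapply sc_trans. apply sc_in. eauto. apply sc_alpha_in. tauto.
    split. unfold avoid in *; simpl; rewrite bnames_nsubst, bdvars_nsubst; dex; split; intros; auto.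
    intros []; subst; [tauto|avoid_tac].
    intros k n Hs; destruct k; simpl in Hs |- *; dex; try discriminate. injection H; intros; subst; eauto.
  - destruct (IHP S Sd) as (P0 & A0 & B0 & _).
    destruct (fresh_ex (S ++ names P0)) as [y' Hy]. rewrite in_app_iff in Hy.
    exists (PRep x y' (nsubst y' y P0)). split. eapply sc_trans. apply sc_rep. eauto. apply sc_alpha_rep. tauto.
    split. unfold avoid in *; simpl; rewrite bnames_nsubst, bdvars_nsubst; dex; split; intros; auto.
    intros []; subst; [tauto|avoid_tac].
    intros k n Hs; destruct k; simpl in Hs |- *; dex; try discriminate.
  - exists (PFwd x y). split. apply sc_refl. split. split; simpl; auto. auto.
  - destruct (alpha_list x bs S Sd H) as (bs' & H1 & H2 & H3).
    exists (PCase x bs'). split. apply (H2 []). split. auto.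
    intros k n Hs; destruct k; simpl in Hs |- *; dex; try discriminate. injection H0; intros; subst.
    exists bs'. split; auto. rewrite H1; auto.
  - destruct (IHP S Sd) as (P0 & A0 & B0 & _).
    exists (PSel x l P0). split. apply sc_sel; auto. split. unfold avoid in *; simpl; auto.
    intros k n Hs; destruct k; simpl in Hs |- *; dex; try discriminate. injection H; intros; subst; eauto.
  - destruct (IHP S Sd) as (P0 & A0 & B0 & _).
    exists (POutAt x y w P0). split. apply sc_outat; auto. split. unfold avoid in *; simpl; auto.
    intros k n Hs; destruct k; simpl in Hs |- *; dex; try discriminate. injection H; intros; subst; eauto.
  - destruct (IHP S Sd) as (P0 & A0 & B0 & _).
    destruct (fresh_ex (S ++ names P0)) as [y' Hy]. rewrite in_app_iff in Hy.
    exists (PInAt x y' w (nsubst y' y P0)). split. eapply sc_trans. apply sc_inat. eauto. apply sc_alpha_inat. tauto.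
    split. unfold avoid in *; simpl; rewrite bnames_nsubst, bdvars_nsubst; dex; split; intros; auto.
    intros []; subst; [tauto|avoid_tac].
    intros k n Hs; destruct k; simpl in Hs |- *; dex; try discriminate. injection H; intros; subst; eauto.
  - destruct (IHP S Sd) as (P0 & A0 & B0 & _).
    exists (POutD x w P0). split. apply sc_outd; auto. split. unfold avoid in *; simpl; auto.
    intros k n Hs; destruct k; simpl in Hs |- *; dex; try discriminate. injection H; intros; subst; eauto.
  - destruct (IHP S Sd) as (P0 & A0 & B0 & _).
    destruct (fresh_ex (Sd ++ dvars P0)) as [b Hb]. rewrite in_app_iff in Hb.
    exists (PInD x b (dsubst (DVar b) a P0)). split. eapply sc_trans. apply sc_cong_ind. eauto. apply sc_alpha_ind. tauto.
    split. unfold avoid in *; simpl; rewrite bnames_dsubst, bdvars_dsubst; dex; split; intros; auto.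
    intros []; subst; [tauto|avoid_tac].
    intros k n Hs; destruct k; simpl in Hs |- *; dex; try discriminate. injection H; intros; subst; eauto.
Qed.

Definition rdy (k : pk) (n : name) (P : proc) : Prop :=
  forall S Sd, exists ns G R, sc P (nus ns (PPar G R)) /\ shape k n G /\ avoid S Sd (nus ns (PPar G R)).

Lemma rdy_sc k n P Q : sc P Q -> rdy k n Q -> rdy k n P.
Proof. intros H1 H2 S Sd. destruct (H2 S Sd) as (ns & G & R & A & B & C). exists ns, G, R. eauto using sc_trans. Qed.

Lemma avoid_rep S Sd ns G R : avoid S Sd (nus ns (PPar G R)) <->
  (forall m, In m S -> ~ In m ns /\ ~ In m (bnames G) /\ ~ In m (bnames R)) /\
  (forall a, In a Sd -> ~ In a (bdvars G) /\ ~ In a (bdvars R)).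
Proof.
  unfold avoid. rewrite bnames_nus, bdvars_nus. simpl.
  split; intros [H1 H2]; split; intros.
  - specialize (H1 _ H). rewrite !in_app_iff in H1. tauto.
  - specialize (H2 _ H). rewrite !in_app_iff in H2. tauto.
  - specialize (H1 _ H). rewrite !in_app_iff. tauto.
  - specialize (H2 _ H). rewrite !in_app_iff. tauto.
Qed.

Lemma rdy_prefix k n G : shape k n G -> rdy k n G.
Proof.
  intros Hs S Sd. destruct (alpha G S Sd) as (G' & A & [B1 B2] & C).
  exists [], G', PZero. split. simpl. eapply sc_trans. exact A. apply sc_sym, sc_par_zero.
  split. auto. apply avoid_rep. simpl. split; intros; repeat split; auto.
Qed.

Lemma rdy_bound k n y B : shape k n B -> ~ In y (knames k n) -> rdy k n (PNu y B).
Proof.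
  intros Hs Hy S Sd. destruct (alpha B S Sd) as (B' & A & [B1 B2] & C).
  destruct (fresh_ex (S ++ names B' ++ knames k n)) as [y' Hy']. rewrite !in_app_iff in Hy'.
  exists [y'], (nsubst y' y B'), PZero. split. simpl.
  eapply sc_trans. apply sc_nu. exact A. eapply sc_trans. apply (sc_alpha_nu y y' B'). tauto.
  apply sc_nu, sc_sym, sc_par_zero.
  split. apply shape_nsubst; auto. intros m Hm ->; auto.
  apply avoid_rep. rewrite bnames_nsubst, bdvars_nsubst. simpl. split; intros; repeat split; auto.
  intros [->|[]]; tauto.
Qed.

Lemma rdy_lift k n P u X : rdy k n P -> (forall m, In m (knames k n) -> m <> u) ->
  rdy k n (PNu u (PPar P X)).
Proof.
  intros HP Hk S Sd. destruct (alpha X S Sd) as (X' & AX & [BX1 BX2] & _).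
  destruct (HP (u :: knames k n ++ S ++ names X') Sd) as (ns & G & R & A & Sh & Av).
  apply avoid_rep in Av. destruct Av as [Av1 Av2].
  destruct (fresh_ex (S ++ names (nus ns (PPar G (PPar R X'))))) as [u' Hu']. rewrite in_app_iff in Hu'.
  exists (u' :: ns), (nsubst u' u G), (PPar (nsubst u' u R) (nsubst u' u X')).
  split.
  - eapply sc_trans. apply sc_nu. eapply sc_trans. apply sc_par_l. exact A. apply sc_par_r. exact AX.
    eapply sc_trans. apply sc_nu. apply sc_extr_nus_l.
    { intros m Hm Hf. apply fn_names in Hf. destruct (Av1 m) as [Hn _]; auto.
      right. rewrite !in_app_iff. auto. }
    eapply sc_trans. apply sc_nu. apply sc_nus. apply sc_par_assoc.
    eapply sc_trans. apply (sc_alpha_nu u u'). tauto.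
    rewrite nsubst_nus. simpl. apply sc_refl.
    intro Hu. destruct (Av1 u) as [Hn _]; simpl; auto.
  - split. apply shape_nsubst; auto.
    apply avoid_rep. simpl. rewrite !bnames_nsubst, !bdvars_nsubst. split; intros; rewrite ?in_app_iff.
    + assert (In m (u :: knames k n ++ S ++ names X')) by (right; rewrite !in_app_iff; auto).
      destruct (Av1 _ H0) as (? & ? & ?). repeat split; auto.
      intros [->|]; tauto. intros []; auto. apply BX1 in H; auto.
    + destruct (Av2 _ H). split; auto. intros []; auto. eapply BX2; eauto.
Qed.

Lemma rdy_lift_r k n P u X : rdy k n P -> (forall m, In m (knames k n) -> m <> u) ->
  rdy k n (PNu u (PPar X P)).
Proof.
  intros. eapply rdy_sc. apply sc_nu, sc_par_comm. apply rdy_lift; auto.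
Qed.

Inductive spair : pk -> pk -> Prop :=
| sp_out : spair KOut KIn
| sp_sel ls : spair (KSel ls) (KCase ls)
| sp_at : spair KOutAt KInAt
| sp_d : spair KOutD KInD.

Lemma core_red k1 k2 n A1 A2 : spair k1 k2 -> shape k1 n A1 -> shape k2 n A2 ->
  (forall m, In m (names A1) -> ~ In m (bnames A2)) ->
  (forall a, In a (dvars A1) -> ~ In a (bdvars A2)) -> exists C, red (PPar A1 A2) C.
Proof.
  intros Hp H1 H2 Hn Hd. destruct Hp; simpl in *; dex; subst.
  - eexists. apply red_comm. intro Hb. eapply Hn; simpl; eauto.
  - match goal with Hl : In ?l ls, Hi : forall l, In l ls -> In l (map fst ?bs) |- _ =>
      apply Hi, in_map_iff in Hl; destruct Hl as [[l' Q] [Hl' HQ]] end. simpl in Hl'; subst.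
    eexists. apply red_case. exact HQ.
  - eexists. apply red_at. intro Hb. eapply Hn; simpl; eauto.
  - eexists. apply red_dom. intros b Hb Hb'. eapply Hd; simpl; rewrite ?in_app_iff; eauto.
Qed.

Lemma par4 A1 A2 R1 R2 : sc (PPar (PPar A2 R2) (PPar A1 R1)) (PPar (PPar A1 A2) (PPar R1 R2)).
Proof.
  eapply sc_trans. apply sc_par_comm. eapply sc_trans. apply sc_par_assoc.
  eapply sc_trans. apply sc_par_r. apply sc_sym, sc_par_assoc.
  eapply sc_trans. apply sc_par_r. apply sc_par_l. apply sc_par_comm.
  eapply sc_trans. apply sc_par_r. apply sc_par_assoc.
  apply sc_sym, sc_par_assoc.
Qed.

Lemma sync ks kr n Ps Pr : spair ks kr -> rdy ks n Ps -> rdy kr n Pr ->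
  exists Q, red (PNu n (PPar Ps Pr)) Q.
Proof.
  intros Hp HPs HPr.
  destruct (HPs (n :: fn Pr) []) as (ns1 & A1 & R1 & E1 & Sh1 & Av1).
  destruct (HPr (n :: names (nus ns1 (PPar A1 R1))) (dvars (nus ns1 (PPar A1 R1))))
    as (ns2 & A2 & R2 & E2 & Sh2 & Av2).
  apply avoid_rep in Av1, Av2. destruct Av1 as [Av1 _], Av2 as [Av2 Av2d].
  rewrite names_nus, dvars_nus in *. simpl in *.
  destruct (core_red _ _ _ _ _ Hp Sh1 Sh2) as [C HC].
  { intros m Hm. apply Av2. right. rewrite !in_app_iff. auto. }
  { intros a Ha. apply Av2d. rewrite !in_app_iff. auto. }
  exists (PNu n (nus ns2 (nus ns1 (PPar C (PPar R1 R2))))).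
  eapply red_sc; [| apply red_nu, red_nus, red_nus, red_par, HC | apply sc_refl].
  eapply sc_trans. apply sc_nu. eapply sc_trans. apply sc_par_l. exact E1. apply sc_par_r. exact E2.
  apply sc_nu. eapply sc_trans. apply sc_extr_nus.
  { intros m Hm Hf. apply fn_names in Hf. rewrite names_nus in Hf. simpl in Hf.
    destruct (Av2 m) as [Hx _]; auto. }
  apply sc_nus. eapply sc_trans. apply sc_par_comm. eapply sc_trans. apply sc_extr_nus.
  { intros m Hm Hf. destruct (fn_nus ns2 _ _ Hf) as [Hm2|Hm2].
    - destruct (Av2 m) as [Hx _]; auto. right. rewrite !in_app_iff; auto.
    - apply (sc_fn _ _ E2) in Hm2. destruct (Av1 m) as [Hx _]; simpl; auto. }
  apply sc_nus. apply par4.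
Qed.

Lemma sync_rep u x P Q : rdy KOut u Q -> exists R, red (PNu u (PPar (PRep u x P) Q)) R.
Proof.
  intros HQ. destruct (HQ (u :: fn (PRep u x P)) []) as (ns & A & R & E & Sh & Av).
  apply avoid_rep in Av. destruct Av as [Av _].
  destruct (alpha P (names (nus ns (PPar A R))) []) as (P' & EP & [AvP _] & _).
  simpl in Sh. destruct Sh as (y & B & ->).
  eexists. eapply red_sc; [ | | apply sc_refl].
  { eapply sc_trans. apply sc_nu. eapply sc_trans. apply sc_par_l. apply sc_rep. exact EP. apply sc_par_r. exact E.
  apply sc_nu. eapply sc_trans. apply sc_extr_nus.
  { intros m Hm Hf. apply (sc_fn _ _ (sc_rep u x _ _ EP)) in Hf. destruct (Av m) as [Hx _]; simpl; auto. }
  apply sc_nus. eapply sc_trans. apply sc_sym, sc_par_assoc. apply sc_par_l. apply sc_par_comm. }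
  apply red_nu, red_nus, red_par, red_rep.
  intro Hb. apply (AvP y); auto. rewrite names_nus. simpl. rewrite !in_app_iff. simpl. tauto.
Qed.

Lemma sync_fwd_l y x P1 Q1 : rdy (KFwd y) x P1 -> exists R, red (PNu x (PPar P1 Q1)) R.
Proof.
  intros HP. destruct (HP (x :: y :: fn Q1) []) as (ns & G & R1 & E & Sh & Av).
  apply avoid_rep in Av. destruct Av as [Av _]. simpl in Sh. subst G.
  destruct (alpha Q1 [y] []) as (Q1' & EQ & [AvQ _] & _).
  eexists. eapply red_sc; [ | | apply sc_refl].
  { eapply sc_trans. apply sc_nu. eapply sc_trans. apply sc_par_l. exact E. apply sc_par_r. exact EQ.
  eapply sc_trans. apply sc_nu. apply sc_extr_nus_l.
  { intros m Hm Hf. apply (sc_fn _ _ EQ) in Hf. destruct (Av m) as [Hx _]; simpl; auto. }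
  eapply sc_trans. apply sc_nu_nus. apply sc_nus. apply sc_nu.
  eapply sc_trans. apply sc_par_assoc. apply sc_par_l. apply sc_fwd. }
  apply red_nus, red_fwd.
  simpl. rewrite in_app_iff. intros [Hb|Hb]. destruct (Av y) as (_ & _ & Hx); simpl; auto. apply (AvQ y); simpl; auto.
Qed.

Lemma sync_fwd_r x z P1 Q1 : rdy (KFwd x) z Q1 -> exists R, red (PNu x (PPar P1 Q1)) R.
Proof.
  intros HQ. destruct (HQ (x :: z :: fn P1) []) as (ns & G & R2 & E & Sh & Av).
  apply avoid_rep in Av. destruct Av as [Av _]. simpl in Sh. subst G.
  destruct (alpha P1 [z] []) as (P1' & EP & [AvP _] & _).
  eexists. eapply red_sc; [ | | apply sc_refl].
  { eapply sc_trans. apply sc_nu. eapply sc_trans. apply sc_par_l. exact EP. apply sc_par_r. exact E.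
  eapply sc_trans. apply sc_nu. apply sc_extr_nus.
  { intros m Hm Hf. apply (sc_fn _ _ EP) in Hf. destruct (Av m) as [Hx _]; simpl; auto. }
  eapply sc_trans. apply sc_nu_nus. apply sc_nus. apply sc_nu.
  eapply sc_trans. apply sc_sym, sc_par_assoc. eapply sc_trans. apply sc_par_l. apply sc_par_comm.
  apply sc_par_assoc. }
  apply red_nus, red_fwd.
  simpl. rewrite in_app_iff. intros [Hb|Hb]. apply (AvP z); simpl; auto. destruct (Av z) as (_ & _ & Hx); simpl; auto.
Qed.

Fixpoint prov (A : stype) : option pk :=
  match A with
  | TOne => None | TLolli _ _ => Some KIn | TTensor _ _ => Some KOut
  | TWith bs => Some (KCase (map fst bs)) | TPlus bs => Some (KSel (map fst bs))
  | TBang _ => Some KOut | TAt _ _ => Some KOutAt | TAll _ => Some KInD | TEx _ => Some KOutD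
  | TDown A => prov A
  end.

Fixpoint cns (A : stype) : option pk :=
  match A with
  | TOne => None | TLolli _ _ => Some KOut | TTensor _ _ => Some KIn
  | TWith bs => Some (KSel (map fst bs)) | TPlus bs => Some (KCase (map fst bs))
  | TBang _ => Some KIn | TAt _ _ => Some KInAt | TAll _ => Some KOutD | TEx _ => Some KInD
  | TDown A => cns A
  end.

Lemma prov_open A : forall k d, prov (open_rec k d A) = prov A.
Proof.
  induction A; intros; simpl; auto.
  - do 2 f_equal. induction bs as [|[l B] bs IH]; simpl; congruence.
  - do 2 f_equal. induction bs as [|[l B] bs IH]; simpl; congruence.
Qed.

Lemma cns_open A : forall k d, cns (open_rec k d A) = cns A.
Proof.
  induction A; intros; simpl; auto.
  - do 2 f_equal. induction bs as [|[l B] bs IH]; simpl; congruence.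
  - do 2 f_equal. induction bs as [|[l B] bs IH]; simpl; congruence.
Qed.

Lemma prov_cons_pair A k1 k2 : prov A = Some k1 -> cns A = Some k2 -> spair k1 k2 \/ spair k2 k1.
Proof.
  induction A; simpl; intros H1 H2; try discriminate; auto;
  injection H1; injection H2; intros; subst; auto using spair.
Qed.

Lemma prov_none A : prov A = None -> cns A = None.
Proof. induction A; simpl; intros; try discriminate; auto. Qed.
Lemma cns_none A : cns A = None -> prov A = None.
Proof. induction A; simpl; intros; try discriminate; auto. Qed.

Lemma prov_nf A k : prov A = Some k -> forall y, k <> KFwd y.
Proof. induction A; simpl; intros H; try discriminate; auto; injection H; intros; subst; discriminate. Qed.
Lemma cns_nf A k : cns A = Some k -> forall y, k <> KFwd y.
Proof. induction A; simpl; intros H; try discriminate; auto; injection H; intros; subst; discriminate. Qed.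

Lemma kn_single k n : (forall y, k <> KFwd y) -> knames k n = [n].
Proof. destruct k; simpl; auto. intros H. destruct (H y); auto. Qed.

Lemma rdy_sel_mono ls ls' n P : rdy (KSel ls) n P -> incl ls ls' -> rdy (KSel ls') n P.
Proof.
  intros H Hi S Sd. destruct (H S Sd) as (ns & G & R & A & B & C). exists ns, G, R.
  split; [auto | split; [|auto]]. simpl in *. dex. do 2 eexists. split; eauto.
Qed.

Lemma typed_wfj O G D P z C w : typed O G D P z C w -> wfj G D z.
Proof.
  induction 1; auto.
  unfold wfj in *. eapply Permutation_NoDup; [|exact IHtyped].
  apply perm_skip. apply Permutation_app; apply Permutation_map; auto.
Qed.

Lemma NoDup_app_disj (l1 l2 : list name) a : NoDup (l1 ++ l2) -> In a l1 -> ~ In a l2.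
Proof.
  induction l1; simpl; intros H Hi; [contradiction|]. inversion H; subst.
  destruct Hi as [->|Hi].
  - intro. apply H2. apply in_app_iff; auto.
  - auto.
Qed.
Lemma NoDup_app_l (l1 l2 : list name) : NoDup (l1 ++ l2) -> NoDup l1.
Proof.
  induction l1; simpl; intros H. constructor. inversion H; subst. constructor; auto.
  rewrite in_app_iff in H2; auto.
Qed.
Lemma NoDup_app_r (l1 l2 : list name) : NoDup (l1 ++ l2) -> NoDup l2.
Proof. induction l1; simpl; intros H; auto. inversion H; auto. Qed.

Lemma in_fst n (A : stype) (w : dom) (D : ctx) : In (n,(A,w)) D -> In n (map fst D).
Proof. intros H. apply (in_map fst) in H. exact H. Qed.

Lemma wfj_z_D G D z n : wfj G D z -> In n (map fst D) -> n <> z.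
Proof. unfold wfj. intros H Hn ->. inversion H; subst. apply H2, in_app_iff; auto. Qed.
Lemma wfj_z_G G D z n : wfj G D z -> In n (map fst G) -> n <> z.
Proof. unfold wfj. intros H Hn ->. inversion H; subst. apply H2, in_app_iff; auto. Qed.
Lemma wfj_G_D G D z a b : wfj G D z -> In a (map fst G) -> In b (map fst D) -> a <> b.
Proof. unfold wfj. intros H Ha Hb ->. inversion H; subst. eapply NoDup_app_disj; eauto. Qed.
Lemma wfj_D G D z : wfj G D z -> NoDup (map fst D).
Proof. unfold wfj. intros H. inversion H; subst. eapply NoDup_app_r; eauto. Qed.
Lemma wfj_G G D z : wfj G D z -> NoDup (map fst G).
Proof. unfold wfj. intros H. inversion H; subst. eapply NoDup_app_l; eauto. Qed.

Definition Prog (G D : ctx) (P : proc) (z : name) (C : stype) : Prop :=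
  (exists Q, red P Q) \/
  (exists k, prov C = Some k /\ rdy k z P) \/
  (exists n A w' k, In (n,(A,w')) D /\ cns A = Some k /\ rdy k n P) \/
  (exists u A w', In (u,(A,w')) G /\ rdy KOut u P) \/
  (exists y A w', In (y,(A,w')) D /\ rdy (KFwd y) z P) \/
  (tl P = false /\ prov C = None /\ forall n A w', In (n,(A,w')) D -> cns A = None).

Lemma red_cut_r x P Q Q' : red Q Q' -> red (PNu x (PPar P Q)) (PNu x (PPar Q' P)).
Proof. intros H. eapply red_sc. apply sc_nu, sc_par_comm. apply red_nu, red_par, H. apply sc_refl. Qed.

Lemma nodup_head_ne (x n : name) l : NoDup (x :: l) -> In n l -> n <> x.
Proof. intros H Hn ->. inversion H; auto. Qed.

Ltac g1 := left.
Ltac g2 := right; left.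
Ltac g3 := right; right; left.
Ltac g4 := do 3 right; left.
Ltac g5 := do 4 right; left.
Ltac g6 := do 5 right.

Lemma prog_cut O G D1 D2 P x A w2 Q z C w1 :
  typed O G D1 P x A w2 -> typed O G ((x,(A,w2))::D2) Q z C w1 ->
  Prog G D1 P x A -> Prog G ((x,(A,w2))::D2) Q z C -> Prog G (D1++D2) (PNu x (PPar P Q)) z C.
Proof.
  unfold Prog. intros Ht1 Ht2 IH1 IH2.
  pose proof (typed_wfj _ _ _ _ _ _ _ Ht1) as W1.
  pose proof (typed_wfj _ _ _ _ _ _ _ Ht2) as W2.
  assert (Hxz : x <> z) by (eapply wfj_z_D; eauto; simpl; auto).
  assert (HD2 : forall n, In n (map fst D2) -> n <> x).
  { intros n Hn. eapply nodup_head_ne; [apply (wfj_D _ _ _ W2) | exact Hn]. }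
  assert (HG2 : forall n, In n (map fst G) -> n <> x).
  { intros n Hn. eapply wfj_G_D; eauto. simpl; auto. }
  destruct IH1 as [H1|[H1|[H1|[H1|[H1|H1]]]]].
  - g1. destruct H1 as [P' HP']. eexists. apply red_nu, red_par, HP'.
  - destruct H1 as (k1 & Hk1 & Hr1). destruct IH2 as [H2|[H2|[H2|[H2|[H2|H2]]]]].
    + g1. destruct H2 as [Q' HQ']. eexists. apply red_cut_r. exact HQ'.
    + g2. destruct H2 as (k2 & Hk2 & Hr2). exists k2. split; auto. apply rdy_lift_r; auto.
      rewrite (kn_single _ _ (prov_nf _ _ Hk2)). intros m [<-|[]]. auto.
    + destruct H2 as (n & A' & w' & k2 & Hin & Hk2 & Hr2). destruct Hin as [Heq|Hin].
      * injection Heq; intros; subst. g1. destruct (prov_cons_pair _ _ _ Hk1 Hk2) as [Hp|Hp].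
        -- eapply sync; eauto.
        -- destruct (sync _ _ _ _ _ Hp Hr2 Hr1) as [R HR]. exists R.
           eapply red_sc; [apply sc_nu, sc_par_comm | exact HR | apply sc_refl].
      * g3. exists n, A', w', k2. split; [apply in_or_app; right; auto | split; auto].
        apply rdy_lift_r; auto. rewrite (kn_single _ _ (cns_nf _ _ Hk2)). intros m [<-|[]].
        apply HD2. eapply in_fst; eauto.
    + g4. destruct H2 as (u & A' & w' & Hin & Hr2). exists u, A', w'. split; auto.
      apply rdy_lift_r; auto. simpl. intros m [<-|[]]. apply HG2. eapply in_fst; eauto.
    + destruct H2 as (y & A' & w' & Hin & Hr2). destruct Hin as [Heq|Hin].
      * injection Heq; intros; subst. g1. eapply sync_fwd_r; eauto.
      * g5. exists y, A', w'. split; [apply in_or_app; right; auto|].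
        apply rdy_lift_r; auto. simpl. intros m [<-|[<-|[]]]; auto. apply HD2. eapply in_fst; eauto.
    + destruct H2 as (_ & _ & H2). specialize (H2 x A w2 (or_introl eq_refl)).
      apply cns_none in H2. congruence.
  - g3. destruct H1 as (n & A' & w' & k & Hin & Hk & Hr). exists n, A', w', k.
    split; [apply in_or_app; left; auto | split; auto].
    apply rdy_lift; auto. rewrite (kn_single _ _ (cns_nf _ _ Hk)). intros m [<-|[]].
    eapply wfj_z_D; eauto. eapply in_fst; eauto.
  - g4. destruct H1 as (u & A' & w' & Hin & Hr). exists u, A', w'. split; auto.
    apply rdy_lift; auto. simpl. intros m [<-|[]]. eapply wfj_z_G; eauto. eapply in_fst; eauto.
  - g1. destruct H1 as (y & A' & w' & Hin & Hr). eapply sync_fwd_l; eauto.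
  - destruct H1 as (Htl1 & Hp1 & HD1). destruct IH2 as [H2|[H2|[H2|[H2|[H2|H2]]]]].
    + g1. destruct H2 as [Q' HQ']. eexists. apply red_cut_r. exact HQ'.
    + g2. destruct H2 as (k2 & Hk2 & Hr2). exists k2. split; auto. apply rdy_lift_r; auto.
      rewrite (kn_single _ _ (prov_nf _ _ Hk2)). intros m [<-|[]]. auto.
    + destruct H2 as (n & A' & w' & k2 & Hin & Hk2 & Hr2). destruct Hin as [Heq|Hin].
      * injection Heq; intros; subst. apply prov_none in Hp1. congruence.
      * g3. exists n, A', w', k2. split; [apply in_or_app; right; auto | split; auto].
        apply rdy_lift_r; auto. rewrite (kn_single _ _ (cns_nf _ _ Hk2)). intros m [<-|[]].
        apply HD2. eapply in_fst; eauto.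
    + g4. destruct H2 as (u & A' & w' & Hin & Hr2). exists u, A', w'. split; auto.
      apply rdy_lift_r; auto. simpl. intros m [<-|[]]. apply HG2. eapply in_fst; eauto.
    + destruct H2 as (y & A' & w' & Hin & Hr2). destruct Hin as [Heq|Hin].
      * injection Heq; intros; subst. g1. eapply sync_fwd_r; eauto.
      * g5. exists y, A', w'. split; [apply in_or_app; right; auto|].
        apply rdy_lift_r; auto. simpl. intros m [<-|[<-|[]]]; auto. apply HD2. eapply in_fst; eauto.
    + destruct H2 as (Htl2 & Hp2 & HD2').
      g6. simpl. rewrite Htl1, Htl2. split; auto. split; auto.
      intros n A' w' Hin. apply in_app_or in Hin. destruct Hin as [Hin|Hin]; eauto.
      apply (HD2' n A' w'). right; auto.
Qed.

Lemma prog_cutbang O G P x A w1 u D Q z C w2 :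
  typed O ((u,(A,w1))::G) D Q z C w2 -> Prog ((u,(A,w1))::G) D Q z C ->
  Prog G D (PNu u (PPar (PRep u x P) Q)) z C.
Proof.
  unfold Prog. intros Ht IH.
  pose proof (typed_wfj _ _ _ _ _ _ _ Ht) as W.
  assert (Huz : u <> z) by (eapply wfj_z_G; eauto; simpl; auto).
  assert (HD : forall n, In n (map fst D) -> n <> u).
  { intros n Hn Heq. eapply (wfj_G_D _ _ _ u n W); simpl; auto. }
  destruct IH as [H2|[H2|[H2|[H2|[H2|H2]]]]].
  - g1. destruct H2 as [Q' HQ']. eexists. apply red_cut_r. exact HQ'.
  - g2. destruct H2 as (k2 & Hk2 & Hr2). exists k2. split; auto. apply rdy_lift_r; auto.
    rewrite (kn_single _ _ (prov_nf _ _ Hk2)). intros m [<-|[]]. auto.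
  - g3. destruct H2 as (n & A' & w' & k2 & Hin & Hk2 & Hr2). exists n, A', w', k2. split; auto. split; auto.
    apply rdy_lift_r; auto. rewrite (kn_single _ _ (cns_nf _ _ Hk2)). intros m [<-|[]].
    apply HD. eapply in_fst; eauto.
  - destruct H2 as (v & A' & w' & Hin & Hr2). destruct Hin as [Heq|Hin].
    + injection Heq; intros; subst. g1. apply sync_rep; auto.
    + g4. exists v, A', w'. split; auto. apply rdy_lift_r; auto. simpl. intros m [<-|[]].
      eapply nodup_head_ne. apply (wfj_G _ _ _ W). eapply in_fst; eauto.
  - g5. destruct H2 as (y & A' & w' & Hin & Hr2). exists y, A', w'. split; auto.
    apply rdy_lift_r; auto. simpl. intros m [<-|[<-|[]]]; auto. apply HD. eapply in_fst; eauto.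
  - destruct H2 as (Htl2 & Hp2 & HD2). g6. simpl. rewrite Htl2. auto.
Qed.

Lemma progress O G D P z C w : typed O G D P z C w -> Prog G D P z C.
Proof.
  unfold Prog.
  induction 1 as
  [ O G x z A w Hwfj
  | O G z w Hwfj
  | O G D P z C w1 x w2 Ht IH Hwfj
  | O G D y A B P z w Ht IH Hwfj
  | O G D1 D2 P y A w2 Q x B z C w1 Ht1 IH1 Ht2 IH2 Hfr Hwfj
  | O G D1 D2 P y A Q z B w Ht1 IH1 Ht2 IH2 Hfr Hwfj
  | O G D y A x B P z C w1 w2 Ht IH Hwfj
  | O G D ps bs z w Hnd Hperm Hall IHall Hwfj
  | O G D x l A w2 P z C w1 Ht IH Hwfj
  | O G D x bs bs' k Ak w2 P z C w1 Ht IH Hnin Hperm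
  | O G D P z l A w Ht IH Hwfj
  | O G D P z bs bs' k Ak w Ht IH Hnin Hperm
  | O G D x qs bs w2 z C w1 Hnd Hperm Hall IHall Hwfj
  | O G Q y A w z u Ht IH Hfr Hwfj
  | O G u A w2 D P z C w1 x Ht IH Hwfj
  | O G u A w2 D y P z C w1 Hin Hr Ht IH Hwfj
  | O G D1 D2 P x A w2 Q z C w1 Hr Hrc Ht1 IH1 Ht2 IH2 Hwfj
  | O G P x A w1 u D Q z C w2 Ht1 IH1 Ht2 IH2 Hwfj
  | O G D P y A w1 w2 z Hacc Hrc Ht IH Hfr Hwfj
  | O G D x y A w2 w3 P z C w1 Ht IH Hwfj
  | O G D P z A w1 a Ht IH Hnin Hwfj
  | O G D x A w2 w3 Q z C w1 Hacc Ht IH Hwfj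
  | O G D P z A w1 w2 Hacc Ht IH Hwfj
  | O G D x A w2 Q z C w1 a Ht IH Hnin Hwfj
  | O G D P z A w Ht IH
  | O G D x A w P z C w1 Ht IH
  | O G G' D D' P z A w HG HD Ht IH
  | O G D P Q z A w Hsc Ht IH ].
  - g5. exists x, A, w. split. left; auto. apply rdy_prefix. simpl; auto.
  - g6. simpl. repeat split; auto. intros ? ? ? [].
  - destruct IH as [H|[H|[H|[H|[H|H]]]]]; [g1|g2|g3|g4|g5|g6]; dex; eauto.
    + do 4 eexists. split; [right; eassumption | split; eassumption].
    + do 3 eexists. split; [right; eassumption | eassumption].
    + split; auto. split; auto. intros n A w' [Heq|Hin]; [injection Heq; intros; subst; reflexivity | eapply H1; eauto].
  - g2. exists KIn. split; auto. apply rdy_prefix. simpl; eauto.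
  - g3. exists x, (TLolli A B), w2, KOut. split; [left; auto| split; auto].
    unfold PBOut. apply rdy_bound. simpl; eauto.
    simpl. intros [Hxy|[]]. apply Hfr. right. apply in_app_iff. right. simpl. left; auto.
  - g2. exists KOut. split; auto. unfold PBOut. apply rdy_bound. simpl; eauto.
    simpl. intros [Hxy|[]]. apply Hfr. left; auto.
  - g3. exists x, (TTensor A B), w2, KIn. split; [left; auto| split; auto].
    apply rdy_prefix. simpl; eauto.
  - g2. eexists. split. reflexivity. apply rdy_prefix. simpl. exists ps. split; auto.
    intros l Hl. eapply Permutation_in; [apply Permutation_sym; exact Hperm | exact Hl].
  - g3. exists x, (TWith [(l,A)]), w2, (KSel [l]). split; [left; auto| split; auto].
    apply rdy_prefix. simpl. exists l, P. split; auto.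
  -
    assert (Hinc : incl (map fst bs) (map fst bs')).
    { intros l Hl. eapply Permutation_in. apply Permutation_sym, Permutation_map. exact Hperm. simpl. right; auto. }
    destruct IH as [H|[H|[H|[H|[H|H]]]]].
    + g1; auto.
    + g2; auto.
    + destruct H as (n & A0 & w' & k0 & Hin & Hc & Hr). destruct Hin as [Heq|Hin].
      * injection Heq; intros; subst. simpl in Hc. injection Hc; intros; subst.
        g3. exists n, (TWith bs'), w', (KSel (map fst bs')). split; [left; auto | split; auto].
        eapply rdy_sel_mono; eauto.
      * g3. exists n, A0, w', k0. split; [right; auto | split; auto].
    + g4; auto.
    + destruct H as (y & A0 & w' & Hin & Hr). g5. destruct Hin as [Heq|Hin].
      * injection Heq; intros; subst. exists y, (TWith bs'), w'. split; auto. left; auto.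
      * exists y, A0, w'. split; auto. right; auto.
    + destruct H as (H1 & H2 & H3). g6. split; auto. split; auto.
      intros n A0 w' [Heq|Hin].
      * injection Heq; intros; subst. specialize (H3 n (TWith bs) w' (or_introl eq_refl)). discriminate.
      * apply (H3 n A0 w'). right; exact Hin.
  - g2. exists (KSel [l]). split; auto. apply rdy_prefix. simpl. exists l, P. split; auto.
  -
    assert (Hinc : incl (map fst bs) (map fst bs')).
    { intros l Hl. eapply Permutation_in. apply Permutation_sym, Permutation_map. exact Hperm. simpl. right; auto. }
    destruct IH as [H|[H|[H|[H|[H|H]]]]].
    + g1; auto.
    + destruct H as (k0 & Hk & Hr). simpl in Hk. injection Hk; intros; subst.
      g2. exists (KSel (map fst bs')). split; auto. eapply rdy_sel_mono; eauto.
    + g3; auto.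
    + g4; auto.
    + g5; auto.
    + destruct H as (_ & H & _). discriminate.
  - g3. exists x, (TPlus bs), w2, (KCase (map fst bs)). split; [left; auto| split; auto].
    apply rdy_prefix. simpl. exists qs. split; auto.
    intros l Hl. eapply Permutation_in; [apply Permutation_sym; exact Hperm | exact Hl].
  - g2. exists KOut. split; auto. unfold PBOut. apply rdy_bound. simpl; eauto.
    simpl. intros [Hxy|[]]. apply Hfr. left; auto.
  - g3. exists x, (TBang A), w2, KIn. split; [left; auto| split; auto].
    apply rdy_prefix. simpl; eauto.
  - g4. exists u, A, w2. split; auto. unfold PBOut. apply rdy_bound. simpl; eauto.
    simpl. intros [Hxy|[]]. eapply (wfj_G_D _ _ _ u y (typed_wfj _ _ _ _ _ _ _ Ht)); auto.
    eapply in_fst; eauto. simpl; auto.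
  - eapply prog_cut; eauto.
  - eapply prog_cutbang; eauto.
  - g2. exists KOutAt. split; auto. unfold PBOutAt. apply rdy_bound. simpl; eauto.
    simpl. intros [Hxy|[]]. apply Hfr. left; auto.
  - g3. exists x, (TAt (TD w3) A), w2, KInAt. split; [left; auto| split; auto].
    apply rdy_prefix. simpl; eauto.
  - g2. exists KInD. split; auto. apply rdy_prefix. simpl; eauto.
  - g3. exists x, (TAll A), w2, KOutD. split; [left; auto| split; auto].
    apply rdy_prefix. simpl; eauto.
  - g2. exists KOutD. split; auto. apply rdy_prefix. simpl; eauto.
  - g3. exists x, (TEx A), w2, KInD. split; [left; auto| split; auto].
    apply rdy_prefix. simpl; eauto.
  - unfold open in IH. rewrite prov_open in IH. exact IH.
  - destruct IH as [H|[H|[H|[H|[H|H]]]]].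
    + g1; auto.
    + g2; auto.
    + destruct H as (n & A0 & w' & k0 & Hin & Hc & Hr). destruct Hin as [Heq|Hin].
      * injection Heq; intros; subst. unfold open in Hc. rewrite cns_open in Hc.
        g3. exists n, (TDown A), w', k0. split; [left; auto | split; auto].
      * g3. exists n, A0, w', k0. split; [right; auto | split; auto].
    + g4; auto.
    + destruct H as (y & A0 & w' & Hin & Hr). g5. destruct Hin as [Heq|Hin].
      * injection Heq; intros; subst. exists y, (TDown A), w'. split; auto. left; auto.
      * exists y, A0, w'. split; auto. right; auto.
    + destruct H as (H1 & H2 & H3). g6. split; auto. split; auto.
      intros n A0 w' [Heq|Hin].
      * injection Heq; intros; subst. specialize (H3 n (open A w') w' (or_introl eq_refl)).
        unfold open in H3. rewrite cns_open in H3. exact H3.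
      * apply (H3 n A0 w'). right; exact Hin.
  - destruct IH as [H|[H|[H|[H|[H|H]]]]]; [g1|g2|g3|g4|g5|g6]; auto.
    + dex. do 4 eexists. split; [eapply Permutation_in; eauto | split; eauto].
    + dex. do 3 eexists. split; [eapply Permutation_in; eauto | eauto].
    + dex. do 3 eexists. split; [eapply Permutation_in; eauto | eauto].
    + dex. split; auto. split; auto. intros. eapply H1. eapply Permutation_in. apply Permutation_sym; eauto. eauto.
  - destruct IH as [H|[H|[H|[H|[H|H]]]]]; [g1|g2|g3|g4|g5|g6]; dex.
    + eexists. eapply red_sc; [exact Hsc | eassumption | apply sc_refl].
    + eexists. split; eauto. eapply rdy_sc; eauto.
    + do 4 eexists. split; eauto. split; eauto. eapply rdy_sc; eauto.
    + do 3 eexists. split; eauto. eapply rdy_sc; eauto.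
    + do 3 eexists. split; eauto. eapply rdy_sc; eauto.
    + rewrite (sc_tl _ _ Hsc). auto.
Qed.

Lemma live_tl P : live P -> tl P = true.
Proof.
  intros (ns & G & R & Hg & Hsc). rewrite (sc_tl _ _ Hsc). clear Hsc.
  induction ns; simpl; auto. destruct G; simpl in *; try contradiction; auto.
Qed.

Theorem theorem5 (O : accenv) (P : proc) (x : name) (w : dom) :
  typed O nil nil P x TOne w -> live P -> exists Q, red P Q.
Proof.
  intros Ht Hl. apply live_tl in Hl.
  destruct (progress _ _ _ _ _ _ _ Ht) as [H|[H|[H|[H|[H|H]]]]]; dex.
  - eauto.
  - discriminate.
  - contradiction.
  - contradiction.
  - contradiction.
  - congruence.
Qed.
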